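(* For every integer $n\ge 2$ there exists a double-$n$ string with diameter at most $5\lceil n/13\rceil-1$. Consequently $\delta(n)\le 5\lceil n/13\rceil -1$ for all $n\ge 2$, and $\limsup_{n\to\infty}\delta(n)/n\le 5/13$.
   Context: A double-$n$ string is a string of length $2n$ over an alphabet of $n$ symbols in which each symbol appears exactly twice. Positions in the string are numbered $1,\dots,2n$. The distance between two distinct symbols is the minimum, over an occurrence of the first symbol and an occurrence of the second, of the absolute difference of their positions. The diameter of a double-$n$ string ($n\ge 2$) is the maximum of the distance over all pairs of distinct symbols. $\delta(n)$ denotes the minimum diameter over all double-$n$ strings. *)

(* Defs.v *)
From HB Require Import structures.
From mathcomp Require Import all_boot all_order all_algebra.
Set Implicit Arguments. Unset Strict Implicit. Unset Printing Implicit Defensive.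

(* A string over the alphabet {0,...,n-1} is a seq nat; positions are
   indexed 0..2n-1 (a shift of the paper's 1..2n, which does not change
   any distance). *)

Definition double_string (n : nat) (s : seq nat) : bool :=
  [&& size s == n.*2, all (fun x => x < n) s
    & all (fun a => count_mem a s == 2) (iota 0 n)].

Definition absdiff (i j : nat) : nat := (i - j) + (j - i).

(* distance between symbols a and b: minimum of |i - j| over positions i
   of a and j of b (default size s is never reached for symbols occurring) *)
Definition sdist (s : seq nat) (a b : nat) : nat :=
  \big[minn/size s]_(i < size s | nth 0 s i == a)
    \big[minn/size s]_(j < size s | nth 0 s j == b) absdiff i j.

Definition diameter (n : nat) (s : seq nat) : nat :=
  \max_(a < n) \max_(b < n | a != b) sdist s a b.

Definition ffun_seq (n : nat) (f : {ffun 'I_(n.*2) -> 'I_n}) : seq nat :=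
  [seq val (f i) | i <- enum 'I_(n.*2)].

(* delta(n): minimum diameter over all double-n strings (every double-n
   string is ffun_seq of some f, and the filter keeps exactly those) *)
Definition delta (n : nat) : nat :=
  \big[minn/n.*2]_(f : {ffun 'I_(n.*2) -> 'I_n} | double_string n (ffun_seq f))
     diameter n (ffun_seq f).

(* Main.v *)
Require Import Defs.
From HB Require Import structures.
From mathcomp Require Import all_boot all_order all_algebra.
From mathcomp Require Import zify ring lra.
Import Order.TTheory GRing.Theory Num.Theory.

Lemma bigmin_leq_seq (I : eqType) (r : seq I) (P : pred I) F x j :
  j \in r -> P j -> \big[minn/x]_(i <- r | P i) F i <= F j.
Proof.
elim: r => // i r IH; rewrite inE big_cons => /orP [/eqP <- -> | jr Pj].
  exact: geq_minl.
case: (P i); last exact: IH.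
by rewrite geq_min IH ?orbT.
Qed.

Lemma bigmin_leq (I : finType) (P : pred I) F x j :
  P j -> \big[minn/x]_(i | P i) F i <= F j.
Proof. by move=> Pj; apply: bigmin_leq_seq => //; rewrite mem_index_enum. Qed.

Lemma sdist_le s a b i j : i < size s -> j < size s ->
  nth 0 s i = a -> nth 0 s j = b -> sdist s a b <= absdiff i j.
Proof.
move=> hi hj ha hb; rewrite /sdist.
set G := fun i0 : 'I_(size s) => \big[minn/size s]_(j0 < size s | nth 0 s j0 == b) absdiff i0 j0.
have h1 := @bigmin_leq _ (fun i0 : 'I_(size s) => nth 0 s i0 == a) G (size s) (Ordinal hi).
apply: leq_trans (h1 _) _; first by rewrite /= ha.
have h2 := @bigmin_leq _ (fun j0 : 'I_(size s) => nth 0 s j0 == b) (fun j0 : 'I_(size s) => absdiff i j0) (size s) (Ordinal hj).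
by apply: leq_trans (h2 _) _; rewrite /= ?hb.
Qed.

Definition sig13 : seq nat :=
  [:: 9; 12; 1; 11; 6; 4; 8; 3; 7; 10; 9; 0; 4; 2; 5; 6; 11; 8; 10; 0; 7; 12; 1; 5; 2; 3].

Definition sig_ok : bool :=
  [&& size sig13 == 26, all (fun c => c < 13) sig13,
    all (fun c => count_mem c sig13 == 2) (iota 0 13) &
    all (fun c => all (fun c' => has (fun B => has (fun B' =>
       (nth 0 sig13 B == c) && (nth 0 sig13 B' == c') && (absdiff B B' <= 4))
       (iota 0 26)) (iota 0 26)) (iota 0 13)) (iota 0 13)].

Lemma sig_okT : sig_ok.
Proof. vm_compute. reflexivity. Qed.

Definition block k c := mkseq (fun j => c * k + j) k.
Definition bigT k (l : seq nat) := flatten [seq block k c | c <- l].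

Lemma size_bigT k l : size (bigT k l) = size l * k.
Proof. by elim: l => //= c l IH; rewrite /bigT /= size_cat size_mkseq -/(bigT k l) IH mulSn. Qed.

Lemma count_block k c a : 0 < k -> count_mem a (block k c) = (a %/ k == c).
Proof.
move=> k0; rewrite count_uniq_mem; last by apply: mkseq_uniq => x y /addnI.
congr (nat_of_bool _); apply/idP/idP.
  case/mapP => j; rewrite mem_iota add0n => /andP [_ jk] ->.
  by rewrite divnMDl // divn_small ?addn0.
move=> /eqP <-; apply/mapP; exists (a %% k); last by rewrite -divn_eq.
by rewrite mem_iota ltn_pmod.
Qed.

Lemma count_bigT k l a : 0 < k -> count_mem a (bigT k l) = count_mem (a %/ k) l.
Proof.
move=> k0; elim: l => //= c l IH.
by rewrite /bigT /= count_cat -/(bigT k l) IH count_block // eq_sym.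
Qed.

Lemma nth_bigT k l B j : B < size l -> j < k ->
  nth 0 (bigT k l) (B * k + j) = nth 0 l B * k + j.
Proof.
move=> + jk; elim: l B => // c l IH [|B] /= hB.
  by rewrite /bigT /= nth_cat size_mkseq jk nth_mkseq.
rewrite /bigT /= nth_cat size_mkseq -/(bigT k l).
rewrite mulSn -addnA ltnNge leq_addr /= addKn IH //.
Qed.

Lemma nth_filter_count (P : pred nat) s i : i < size s -> P (nth 0 s i) ->
  count P (take i s) < size (filter P s) /\
  nth 0 (filter P s) (count P (take i s)) = nth 0 s i.
Proof.
elim: s i => // x s IH [|i] /= hi hP.
  by rewrite hP /=.
have [h1 h2] := IH i hi hP.
by case: (P x) => /=; rewrite ?add1n ?add0n.
Qed.

Lemma count_take_diff (P : pred nat) s i j :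
  absdiff (count P (take i s)) (count P (take j s)) <= absdiff i j.
Proof.
wlog ij : i j / i <= j.
  move=> H; case: (leqP i j) => h; first exact: H.
  rewrite /absdiff addnC [X in _ <= X]addnC; apply: H; exact: ltnW.
rewrite -(subnKC ij) takeD count_cat.
have := count_size P (take (j - i) (drop i s)); rewrite size_take_min.
rewrite /absdiff; lia.
Qed.

Lemma count_lt n (t : seq nat) :
  count (fun x => x < n) t = \sum_(a < n) count_mem (nat_of_ord a) t.
Proof.
elim: n => [|n IH]; first by rewrite big_ord0; elim: t.
rewrite big_ord_recr /= -IH.
rewrite -(count_predUI (fun x => x < n) (pred1 n)).
have -> : count (predI (fun x => x < n) (pred1 n)) t = 0.
  by apply/eqP; rewrite -leqn0 leqNgt -has_count; apply/hasPn => x _ /=; apply/negP => /andP [h /eqP e]; move: h; rewrite e ltnn.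
rewrite addn0; apply: eq_count => x /=; rewrite ltnS leq_eqVlt orbC.
by [].
Qed.

Definition kk n := (n + 12) %/ 13.
Definition Sn n := filter (fun x => x < n) (bigT (kk n) sig13).

Lemma kk_facts n : 2 <= n -> 0 < kk n /\ n <= 13 * kk n.
Proof.
move=> n2; rewrite /kk; have := divn_eq (n + 12) 13; have := ltn_pmod (n + 12) (isT : 0 < 13).
set q := (n + 12) %/ 13; set r := (n + 12) %% 13. lia.
Qed.

Lemma part1 n : 2 <= n ->
  double_string n (Sn n) /\ diameter n (Sn n) <= 5 * kk n - 1.
Proof.
move=> n2; have [k0 nk] := kk_facts n n2.
move: sig_okT => /and4P [/eqP sz /allP lt13 /allP cnt /allP near].
set k := kk n in k0 nk *.
have cntT a : a < n -> count_mem a (bigT k sig13) = 2.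
  move=> an; rewrite count_bigT //; apply/eqP/cnt; rewrite mem_iota /= add0n.
  by rewrite ltn_divLR //; exact: leq_trans an nk.
split.
  rewrite /double_string /Sn; apply/and3P; split.
    rewrite size_filter count_lt (eq_bigr (fun _ => 2)); last by move=> i _; rewrite cntT.
    by rewrite sum_nat_const card_ord muln2.
  exact: filter_all.
  apply/allP => a; rewrite mem_iota add0n /= => an.
  rewrite count_filter (@eq_count _ _ (pred1 a)) ?cntT // => x /=.
  by case: eqP => // ->; rewrite an.
apply/bigmax_leqP => a _; apply/bigmax_leqP => b ab.
set c := a %/ k; set c' := b %/ k.
have ca : c < 13 by rewrite ltn_divLR //; exact: leq_trans (ltn_ord a) nk.
have cb : c' < 13 by rewrite ltn_divLR //; exact: leq_trans (ltn_ord b) nk.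
have := near c; rewrite mem_iota add0n => /(_ ca) /allP /(_ c'); rewrite mem_iota add0n => /(_ cb).
case/hasP => B; rewrite mem_iota add0n => hB; case/hasP => B'; rewrite mem_iota add0n => hB'.
case/andP => /andP [/eqP eB /eqP eB'] dB.
have ja := ltn_pmod a k0; have jb := ltn_pmod b k0.
set p := B * k + a %% k; set q := B' * k + b %% k.
have hp : p < size (bigT k sig13).
  rewrite size_bigT sz /p; have h := leq_mul hB (leqnn k); rewrite mulSn in h; lia.
have hq : q < size (bigT k sig13).
  rewrite size_bigT sz /q; have h := leq_mul hB' (leqnn k); rewrite mulSn in h; lia.
have np : nth 0 (bigT k sig13) p = a by rewrite nth_bigT ?sz // eB -divn_eq.
have nq : nth 0 (bigT k sig13) q = b by rewrite nth_bigT ?sz // eB' -divn_eq.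
have [hp1 hp2] := @nth_filter_count (fun x => x < n) _ _ hp (ltac:(by rewrite np /=)).
have [hq1 hq2] := @nth_filter_count (fun x => x < n) _ _ hq (ltac:(by rewrite nq /=)).
change (sdist (filter (fun x => x < n) (bigT k sig13)) a b <= 5 * k - 1).
apply: leq_trans (@sdist_le _ _ _ _ _ hp1 hq1 _ _) _; rewrite ?hp2 ?hq2 ?np ?nq //.
apply: leq_trans (count_take_diff _ _ _ _) _.
have : absdiff p q <= 5 * k - 1.
  rewrite /p /q /absdiff.
  have h1 : B * k <= B' * k + 4 * k by rewrite -mulnDl leq_mul2r; move: dB; rewrite /absdiff; lia.
  have h2 : B' * k <= B * k + 4 * k by rewrite -mulnDl leq_mul2r; move: dB; rewrite /absdiff; lia.
  lia.
by [].
Qed.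

Lemma delta_le n' s : double_string n'.+1 s -> delta n'.+1 <= diameter n'.+1 s.
Proof.
move=> hs.
move: (hs) => /and3P [/eqP hsz /allP hall _].
set f : {ffun 'I_(n'.+1).*2 -> 'I_n'.+1} := [ffun i : 'I_(n'.+1).*2 => inord (nth 0 s (val i))].
have ef : ffun_seq f = s.
  rewrite /ffun_seq -[RHS](mkseq_nth 0) hsz /mkseq -val_enum_ord -map_comp.
  apply: eq_map => i /=; rewrite /f ffunE /= inordK //.
  by apply: hall; apply: mem_nth; rewrite hsz ltn_ord.
rewrite /delta; apply: leq_trans (@bigmin_leq _ _ _ _ f _) _; first by rewrite ef.
by rewrite ef.
Qed.

Theorem theorem3p7 :
  (forall n : nat, 2 <= n ->
     exists s : seq nat, double_string n s /\
       diameter n s <= 5 * ((n + 12) %/ 13) - 1) /\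
  (forall n : nat, 2 <= n -> delta n <= 5 * ((n + 12) %/ 13) - 1) /\
  (forall eps : rat, (0 < eps)%R ->
     exists N : nat, forall n : nat, N <= n ->
       ((delta n)%:R / n%:R <= 5%:R / 13%:R + eps :> rat)%R).
Proof.
have P2 : forall n : nat, 2 <= n -> delta n <= 5 * ((n + 12) %/ 13) - 1.
  case=> [//|n'] n2; have [h1 h2] := @part1 _ n2.
  exact: leq_trans (@delta_le _ _ h1) h2.
split; first by move=> n n2; exists (Sn n); exact: part1.
split; first exact: P2.
move=> eps eps0.
exists (maxn 2 (Num.truncn (60 / eps)).+1) => n hN.
have n2 : 2 <= n by lia.
have hN2 : (Num.truncn (60 / eps)).+1 <= n by lia.
have hd : 13 * delta n <= 5 * n + 60.
  have := P2 n n2; have := leq_trunc_div (n + 12) 13; lia.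
have hr : (60 / eps < n%:R :> rat)%R.
  apply: (lt_le_trans (real_truncnS_gt _)); last by rewrite ler_nat.
  by rewrite num_real.
have hr' : (60 < n%:R * eps :> rat)%R by rewrite -ltr_pdivrMr.
have n0 : (0 < n%:R :> rat)%R by rewrite ltr0n; lia.
rewrite ler_pdivrMr //.
have := hd; rewrite -(ler_nat rat) natrD !natrM => hd'.
lra.
Qed.
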